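(* Let $\varepsilon>0$ and $x_0$ satisfy $0\le x_0<\tfrac14$ and $\dfrac{\varepsilon^2}{\frac14-\varepsilon^2x_0}<1$. Define $\mathcal{C}:\mathbb{T}^1\to\mathbb{C}$ by $\mathcal{C}(\theta)=\tfrac14-\varepsilon^2x_0-\varepsilon^2e^{2\pi i\theta}$ and $\tilde\gamma:\mathbb{T}^1\to\mathbb{C}$ by $$\tilde\gamma(\theta)=\tfrac12+\varepsilon e^{2\pi i\theta}\sqrt{1+x_0e^{-4\pi i\theta}}$$ (principal branch of the square root). Let $\Gamma=\{(\langle 2\theta\rangle,\tilde\gamma(\theta)):\theta\in\mathbb{T}^1\}$. Then $\Gamma$ is an invariant $2$-curve for the static fibred quadratic polynomial $Q(\theta,z)=(\theta,\ z^2+\mathcal{C}(\theta))$; that is, $\tilde\gamma(\theta)^2+\mathcal{C}(\langle2\theta\rangle)=\tilde\gamma(\theta)$ for every $\theta\in\mathbb{T}^1$.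
   Context: $\mathbb{T}^1=\mathbb{R}/\mathbb{Z}$ and $\langle x\rangle$ denotes the fractional part. A $2$-curve is a set of the form $\{(\langle 2\theta\rangle,\tilde\gamma(\theta)):\theta\in\mathbb{T}^1\}$ with $\tilde\gamma:\mathbb{T}^1\to\mathbb{C}$ continuous and injective. For a fibred map $F(\theta,z)=(\theta+\alpha,f_\theta(z))$ (here $\alpha=0$, ''static''), a $2$-curve is invariant if for some $\tau\in\{0,1\}$, $f_{\langle2\theta\rangle}(\tilde\gamma(\theta))=\tilde\gamma(\theta+\tfrac{\alpha+\tau}{2})$ for all $\theta$; here this is the case $\tau=0$. *)

(* Defs.v *)
From Stdlib Require Import Reals Lra.
From Coquelicot Require Import Coquelicot.
Open Scope R_scope.

Definition cis (t : R) : C := (cos t, sin t).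

(* principal branch of the complex square root:
   real part >= 0, and imaginary part >= 0 on the cut (negative reals). *)
Definition Csqrt (z : C) : C :=
  let r := Cmod z in
  (sqrt ((r + Re z) / 2),
   if Rlt_dec (Im z) 0 then - sqrt ((r - Re z) / 2) else sqrt ((r - Re z) / 2)).

Definition frac (x : R) : R := frac_part x.

(* Functions on T^1 = R/Z are represented as 1-periodic functions on R. *)
Definition T1_fun {A : Type} (g : R -> A) : Prop := forall t, g (t + 1) = g t.

(* gamma~ : T^1 -> C continuous and injective (its graph-lift
   {(<2 theta>, gamma~ theta)} is then a 2-curve). *)
Definition two_curve (g : R -> C) : Prop :=
  T1_fun g /\
  (forall t, continuous g t) /\
  (forall s t, 0 <= s < 1 -> 0 <= t < 1 -> g s = g t -> s = t).

(* invariance of the 2-curve of gamma~ under F(theta,z) = (theta+alpha, f theta z),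
   for the given tau in {0,1}. *)
Definition invariant_2curve (alpha : R) (tau : nat) (f : R -> C -> C) (g : R -> C) : Prop :=
  two_curve g /\ (tau = 0%nat \/ tau = 1%nat) /\
  forall theta, f (frac (2 * theta)) (g theta) = g (theta + (alpha + INR tau) / 2).

Definition Ccurve (eps x0 : R) (theta : R) : C :=
  (RtoC (1/4 - eps^2 * x0) - RtoC (eps^2) * cis (2 * PI * theta))%C.

Definition gamma_t (eps x0 : R) (theta : R) : C :=
  (RtoC (1/2) + RtoC eps * cis (2 * PI * theta)
     * Csqrt (RtoC 1 + RtoC x0 * cis (- (4 * PI * theta))))%C.

(* static fibred quadratic polynomial  Q(theta,z) = (theta, z^2 + C(theta)) *)
Definition Qfib (eps x0 : R) (theta : R) (z : C) : C :=
  (z * z + Ccurve eps x0 theta)%C.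

(* Main.v *)
Require Import Defs.
From Stdlib Require Import Reals.
From Coquelicot Require Import Coquelicot.
From Stdlib Require Import Lra Lia Psatz FunctionalExtensionality.
Open Scope R_scope.

Lemma cos_perZ (x : R) (k : Z) : cos (x + 2 * IZR k * PI) = cos x.
Proof.
  assert (Hs : sin (2 * IZR k * PI) = 0).
  { apply sin_eq_0_1. exists (2 * k)%Z. rewrite mult_IZR. ring. }
  assert (Hc : cos (2 * IZR k * PI) = 1).
  { replace (2 * IZR k * PI) with (2 * (IZR k * PI)) by ring.
    rewrite cos_2a_sin. rewrite sin_eq_0_1. ring. now exists k. }
  rewrite cos_plus, Hs, Hc. ring.
Qed.

Lemma sin_perZ (x : R) (k : Z) : sin (x + 2 * IZR k * PI) = sin x.
Proof.
  assert (Hs : sin (2 * IZR k * PI) = 0).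
  { apply sin_eq_0_1. exists (2 * k)%Z. rewrite mult_IZR. ring. }
  assert (Hc : cos (2 * IZR k * PI) = 1).
  { replace (2 * IZR k * PI) with (2 * (IZR k * PI)) by ring.
    rewrite cos_2a_sin. rewrite sin_eq_0_1. ring. now exists k. }
  rewrite sin_plus, Hs, Hc. ring.
Qed.

Definition AA (u v : R) := sqrt ((sqrt (u ^ 2 + v ^ 2) + u) / 2).
Definition BB (u v : R) := v / (2 * AA u v).

Lemma AA_pos u v : 0 < u -> 0 < AA u v.
Proof.
  intros Hu. unfold AA. apply sqrt_lt_R0.
  pose proof (sqrt_pos (u ^ 2 + v ^ 2)). lra.
Qed.

Lemma Csqrt_eq (u v : R) : 0 < u -> Csqrt (u, v) = (AA u v, BB u v).
Proof.
  intros Hu. pose proof (AA_pos u v Hu) as Ha.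
  unfold Csqrt. simpl.
  set (r := Cmod (u, v)).
  assert (Hr : r = sqrt (u ^ 2 + v ^ 2)) by reflexivity.
  assert (Hr0 : 0 <= r) by (rewrite Hr; apply sqrt_pos).
  assert (Hr2 : r * r = u ^ 2 + v ^ 2).
  { rewrite Hr. apply sqrt_sqrt. nra. }
  assert (Hru : u <= r).
  { apply Rsqr_incr_0_var; unfold Rsqr; nra. }
  assert (Hm : sqrt ((r - u) / 2) * AA u v = Rabs v / 2).
  { unfold AA. rewrite <- Hr. rewrite <- sqrt_mult by lra.
    replace ((r - u) / 2 * ((r + u) / 2)) with ((Rabs v / 2) * (Rabs v / 2)).
    - apply sqrt_square. pose proof (Rabs_pos v). lra.
    - replace ((r - u) / 2 * ((r + u) / 2)) with ((r * r - u * u) / 4) by field.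
      assert (Hv2 : Rabs v * Rabs v = v * v) by (rewrite <- Rabs_mult; apply Rabs_right; nra).
      nra. }
  f_equal.
  unfold BB.
  destruct (Rlt_dec v 0) as [Hv | Hv].
  - rewrite Rabs_left in Hm by lra. field_simplify_eq; [|lra].
    nra.
  - rewrite Rabs_right in Hm by lra. field_simplify_eq; [|lra]. nra.
Qed.

Definition uu (x0 t : R) := 1 + x0 * cos (- (4 * PI * t)).
Definition vv (x0 t : R) := x0 * sin (- (4 * PI * t)).
Definition cc (t : R) := cos (2 * PI * t).
Definition ss (t : R) := sin (2 * PI * t).
Definition G (eps x0 t : R) : C :=
  (1/2 + eps * (cc t * AA (uu x0 t) (vv x0 t) - ss t * BB (uu x0 t) (vv x0 t)),
   eps * (cc t * BB (uu x0 t) (vv x0 t) + ss t * AA (uu x0 t) (vv x0 t))).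

Lemma uu_pos x0 t : 0 <= x0 < 1/4 -> 0 < uu x0 t.
Proof.
  intros H. unfold uu. pose proof (COS_bound (- (4 * PI * t))). nra.
Qed.

Lemma gamma_eq eps x0 t : 0 <= x0 < 1/4 -> gamma_t eps x0 t = G eps x0 t.
Proof.
  intros H. unfold gamma_t.
  assert (E : (RtoC 1 + RtoC x0 * cis (- (4 * PI * t)))%C = (uu x0 t, vv x0 t)).
  { unfold uu, vv, cis, RtoC, Cplus, Cmult. simpl. f_equal; ring. }
  rewrite E, Csqrt_eq by (apply uu_pos; auto).
  unfold G, cc, ss, cis, RtoC, Cplus, Cmult. simpl. f_equal; ring.
Qed.

Lemma AB_sq u v : 0 < u -> AA u v ^ 2 - BB u v ^ 2 = u /\ 2 * AA u v * BB u v = v.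
Proof.
  intros Hu. pose proof (AA_pos u v Hu) as Ha.
  set (r := sqrt (u ^ 2 + v ^ 2)).
  assert (Hr0 : 0 <= r) by apply sqrt_pos.
  assert (Hr2 : r * r = u ^ 2 + v ^ 2) by (apply sqrt_sqrt; nra).
  assert (Ha2 : AA u v * AA u v = (r + u) / 2).
  { unfold AA. fold r. apply sqrt_sqrt. lra. }
  unfold BB. split.
  - field_simplify_eq; [|lra].
    replace (AA u v ^ 4) with ((AA u v * AA u v) ^ 2) by ring.
    replace (AA u v ^ 2) with (AA u v * AA u v) by ring.
    rewrite Ha2. nra.
  - field. lra.
Qed.

Lemma alg_sq x0 c s a b u v : c^2+s^2=1 -> a^2-b^2=u -> 2*a*b=v ->
  u = 1 + x0*(c^2-s^2) -> v = -(x0*(2*s*c)) ->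
  (c*a - s*b)^2 - (c*b + s*a)^2 = (c^2 - s^2) + x0 /\
  2*(c*a - s*b)*(c*b + s*a) = 2*s*c.
Proof.
  intros H1 Hu Hv Hu' Hv'. split.
  - transitivity ((c^2-s^2)*(a^2-b^2) - c*s*(2*(2*a*b))); [ring|].
    rewrite Hu, Hv, Hu', Hv'.
    transitivity (c^2-s^2 + x0*(c^2+s^2)^2); [ring|]. rewrite H1; ring.
  - transitivity ((c^2-s^2)*(2*a*b) + 2*c*s*(a^2-b^2)); [ring|].
    rewrite Hu, Hv, Hu', Hv'.
    ring.
Qed.

Lemma main_alg (eps x0 X Y c s c4 s4 : R) :
  X^2 - Y^2 = (c^2 - s^2) + x0 -> 2*X*Y = 2*s*c -> c4 = c^2 - s^2 -> s4 = 2*s*c ->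
  Cplus (Cmult (1/2 + eps*X, eps*Y) (1/2 + eps*X, eps*Y))
    (Cminus (RtoC (1/4 - eps^2 * x0)) (Cmult (RtoC (eps^2)) (c4, s4))) = (1/2 + eps*X, eps*Y).
Proof.
  intros H1 H2 H3 H4. unfold RtoC, Cplus, Cmult, Cminus, Copp. simpl. f_equal.
  - transitivity (1/2 + eps*X + eps^2*(X^2-Y^2) - eps^2*x0 - eps^2*c4); [field|].
    rewrite H1, H3. ring.
  - transitivity (eps*Y + eps^2*(2*X*Y) - eps^2*s4); [field|].
    rewrite H2, H4. ring.
Qed.

Lemma cis_frac t : cis (2 * PI * frac (2 * t)) = (cos (2 * (2 * PI * t)), sin (2 * (2 * PI * t))).
Proof.
  unfold cis, frac, frac_part.
  replace (2 * PI * (2 * t - IZR (Int_part (2 * t)))) with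
    (2 * (2 * PI * t) + 2 * IZR (- Int_part (2 * t)) * PI)
    by (rewrite opp_IZR; ring).
  rewrite cos_perZ, sin_perZ. reflexivity.
Qed.

Lemma cs1 t : cc t ^ 2 + ss t ^ 2 = 1.
Proof. unfold cc, ss. pose proof (sin2_cos2 (2 * PI * t)). unfold Rsqr in H. lra. Qed.

Lemma uu_eq x0 t : uu x0 t = 1 + x0 * (cc t ^ 2 - ss t ^ 2).
Proof.
  unfold uu, cc, ss. rewrite cos_neg.
  replace (4 * PI * t) with (2 * (2 * PI * t)) by ring. rewrite cos_2a. ring.
Qed.

Lemma vv_eq x0 t : vv x0 t = - (x0 * (2 * ss t * cc t)).
Proof.
  unfold vv, cc, ss. rewrite sin_neg.
  replace (4 * PI * t) with (2 * (2 * PI * t)) by ring. rewrite sin_2a. ring.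
Qed.

Lemma XY_facts x0 t : 0 <= x0 < 1/4 ->
  let a := AA (uu x0 t) (vv x0 t) in let b := BB (uu x0 t) (vv x0 t) in
  (cc t * a - ss t * b)^2 - (cc t * b + ss t * a)^2 = (cc t ^ 2 - ss t ^ 2) + x0 /\
  2*(cc t * a - ss t * b)*(cc t * b + ss t * a) = 2 * ss t * cc t.
Proof.
  intros Hx a b. destruct (AB_sq (uu x0 t) (vv x0 t) (uu_pos x0 t Hx)) as [H1 H2].
  apply (alg_sq x0 _ _ a b (uu x0 t) (vv x0 t)); auto.
  - apply cs1.
  - apply uu_eq.
  - apply vv_eq.
Qed.

Lemma angle_inj s t : 0 <= s < 1 -> 0 <= t < 1 ->
  cos (2 * PI * s) = cos (2 * PI * t) -> sin (2 * PI * s) = sin (2 * PI * t) -> s = t.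
Proof.
  intros Hs Ht Hc Hsn.
  assert (H0 : sin (2 * PI * s - 2 * PI * t) = 0).
  { rewrite sin_minus, Hc, Hsn. ring. }
  assert (H1 : cos (2 * PI * s - 2 * PI * t) = 1).
  { rewrite cos_minus, Hc, Hsn. pose proof (sin2_cos2 (2 * PI * t)). unfold Rsqr in H. lra. }
  destruct (sin_eq_0_0 _ H0) as [k Hk].
  pose proof PI_RGT_0 as Hpi.
  assert (Hk2 : IZR k = 2 * (s - t)).
  { apply (Rmult_eq_reg_r PI); [|lra]. rewrite <- Hk. ring. }
  assert (Hlo : (-2 < k)%Z) by (apply lt_IZR; lra).
  assert (Hhi : (k < 2)%Z) by (apply lt_IZR; lra).
  assert (k = -1 \/ k = 0 \/ k = 1)%Z as [-> | [-> | ->]] by lia.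
  - rewrite Hk in H1. replace (IZR (-1) * PI) with (- PI) in H1 by (simpl; ring).
    rewrite cos_neg, cos_PI in H1. lra.
  - simpl in Hk2. lra.
  - rewrite Hk in H1. replace (IZR 1 * PI) with PI in H1 by (simpl; ring).
    rewrite cos_PI in H1. lra.
Qed.

Ltac side_pos Hu :=
  repeat split;
  try (match goal with |- 0 < (sqrt ?a + ?b) * / 2 => pose proof (sqrt_pos a); lra end);
  try (match goal with |- 2 * sqrt ((sqrt ?b + ?u) * / 2) <> 0 =>
        pose proof (sqrt_pos b);
        assert (0 < sqrt ((sqrt b + u) * / 2)) by (apply sqrt_lt_R0; lra); lra end);
  try nra.

Lemma G1_cont eps x0 t : 0 <= x0 < 1/4 -> continuous (fun t => fst (G eps x0 t)) t.
Proof.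
  intros H. pose proof (uu_pos x0 t H) as Hu. unfold uu in Hu.
  apply (@ex_derive_continuous R_AbsRing R_NormedModule).
  unfold G, BB, AA, uu, vv, cc, ss. simpl. auto_derive. side_pos Hu.
Qed.

Lemma G2_cont eps x0 t : 0 <= x0 < 1/4 -> continuous (fun t => snd (G eps x0 t)) t.
Proof.
  intros H. pose proof (uu_pos x0 t H) as Hu. unfold uu in Hu.
  apply (@ex_derive_continuous R_AbsRing R_NormedModule).
  unfold G, BB, AA, uu, vv, cc, ss. simpl. auto_derive. side_pos Hu.
Qed.

Lemma G_cont eps x0 t : 0 <= x0 < 1/4 -> continuous (G eps x0) t.
Proof.
  intros H.
  apply (continuous_comp_2 (X := C_UniformSpace) (fun t => fst (G eps x0 t)) (fun t => snd (G eps x0 t))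
    (fun a b => (a, b)) t (G1_cont eps x0 t H) (G2_cont eps x0 t H)).
  apply filterlim_ext with (f := fun x => x).
  - intros [a b]; reflexivity.
  - apply filterlim_id.
Qed.

Lemma cc_per t : cc (t + 1) = cc t.
Proof. unfold cc. replace (2 * PI * (t + 1)) with (2 * PI * t + 2 * IZR 1 * PI) by ring. apply cos_perZ. Qed.
Lemma ss_per t : ss (t + 1) = ss t.
Proof. unfold ss. replace (2 * PI * (t + 1)) with (2 * PI * t + 2 * IZR 1 * PI) by ring. apply sin_perZ. Qed.
Lemma uu_per x0 t : uu x0 (t + 1) = uu x0 t.
Proof. rewrite !uu_eq, cc_per, ss_per. reflexivity. Qed.
Lemma vv_per x0 t : vv x0 (t + 1) = vv x0 t.
Proof. rewrite !vv_eq, cc_per, ss_per. reflexivity. Qed.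

Theorem mainTheorem2 (eps x0 : R) :
  0 < eps -> 0 <= x0 < 1/4 -> eps^2 / (1/4 - eps^2 * x0) < 1 ->
  invariant_2curve 0 0 (Qfib eps x0) (gamma_t eps x0).
Proof.
  intros Heps Hx _.
  split; [| split; [left; reflexivity |]].
  - split; [| split].
    + intros t. rewrite !gamma_eq by exact Hx. unfold G.
      rewrite cc_per, ss_per, uu_per, vv_per. reflexivity.
    + intros t. replace (gamma_t eps x0) with (G eps x0).
      * apply G_cont; exact Hx.
      * apply functional_extensionality. intros u. symmetry. apply gamma_eq; exact Hx.
    + intros s t Hs Ht Heq. rewrite !gamma_eq in Heq by exact Hx. unfold G in Heq.
      injection Heq as E1 E2.
      destruct (XY_facts x0 s Hx) as [F1 F2].
      destruct (XY_facts x0 t Hx) as [F3 F4].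
      set (a1 := AA (uu x0 s) (vv x0 s)) in *.
      set (b1 := BB (uu x0 s) (vv x0 s)) in *.
      set (a2 := AA (uu x0 t) (vv x0 t)) in *.
      set (b2 := BB (uu x0 t) (vv x0 t)) in *.
      assert (EX : cc s * a1 - ss s * b1 = cc t * a2 - ss t * b2).
      { apply (Rmult_eq_reg_l eps); lra. }
      assert (EY : cc s * b1 + ss s * a1 = cc t * b2 + ss t * a2).
      { apply (Rmult_eq_reg_l eps); lra. }
      rewrite EX, EY in F1, F2.
      assert (C1 : cc s ^ 2 - ss s ^ 2 = cc t ^ 2 - ss t ^ 2) by lra.
      assert (C2 : ss s * cc s = ss t * cc t) by lra.
      assert (Eu : uu x0 s = uu x0 t) by (rewrite !uu_eq, C1; reflexivity).
      assert (Ev : vv x0 s = vv x0 t).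
      { rewrite !vv_eq. replace (2 * ss s * cc s) with (2 * (ss s * cc s)) by ring.
        rewrite C2. ring. }
      assert (Ea : a1 = a2) by (unfold a1, a2; rewrite Eu, Ev; reflexivity).
      assert (Eb : b1 = b2) by (unfold b1, b2; rewrite Eu, Ev; reflexivity).
      rewrite <- Ea, <- Eb in EX, EY.
      assert (Ha : 0 < a1) by (apply AA_pos, uu_pos, Hx).
      assert (N : 0 < a1 ^ 2 + b1 ^ 2) by nra.
      assert (Ec : (cc s - cc t) * (a1 ^ 2 + b1 ^ 2) = 0).
      { transitivity (a1 * (cc s * a1 - ss s * b1 - (cc t * a1 - ss t * b1))
                      + b1 * (cc s * b1 + ss s * a1 - (cc t * b1 + ss t * a1))); [ring|].
        rewrite EX, EY. ring. }
      assert (Es : (ss s - ss t) * (a1 ^ 2 + b1 ^ 2) = 0).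
      { transitivity (a1 * (cc s * b1 + ss s * a1 - (cc t * b1 + ss t * a1))
                      - b1 * (cc s * a1 - ss s * b1 - (cc t * a1 - ss t * b1))); [ring|].
        rewrite EX, EY. ring. }
      apply Rmult_integral in Ec. apply Rmult_integral in Es.
      apply angle_inj; auto.
      * destruct Ec as [Ec | Ec]; [unfold cc in Ec; lra | lra].
      * destruct Es as [Es | Es]; [unfold ss in Es; lra | lra].
  - intros theta.
    replace (theta + (0 + INR 0) / 2) with theta by (simpl; field).
    unfold Qfib, Ccurve. rewrite gamma_eq by exact Hx. rewrite cis_frac.
    destruct (XY_facts x0 theta Hx) as [F1 F2].
    unfold G.
    apply (main_alg eps x0 _ _ (cc theta) (ss theta)); auto.
    + unfold cc, ss. rewrite cos_2a. ring.
    + unfold cc, ss. rewrite sin_2a. ring.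
Qed.
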